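(* Let $G$ be a graph with $n\ge 2$ vertices that is both connected and co-connected. Then every connecting hypergraph $H$ of $G$ satisfies $\mathrm{cost}(H)\ge \frac{2(n-1)}{3}$.
   Context: All graphs are finite, simple and undirected. $G[X]$ denotes the subgraph induced by $X\subseteq V(G)$. The complement $\bar G$ has vertex set $V(G)$ and an edge $xy$ ($x\neq y$) iff $xy\notin E(G)$; $G$ is co-connected if $\bar G$ is connected. A connecting hypergraph of $G$ is a set $H$ of subsets of $V(G)$ such that every $E\in H$ satisfies $|E|\ge 2$ and $G[E]$ is connected, and for every pair of distinct non-adjacent vertices $u,v$ of $G$ there exists $E\in H$ with $u,v\in E$. Its cost is $\mathrm{cost}(H)=\sum_{E\in H}(|E|-2)$. *)

(* Defs.v *)
From mathcomp Require Import all_boot.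
Set Implicit Arguments. Unset Strict Implicit. Unset Printing Implicit Defensive.

Definition simple_graph (T : finType) (e : rel T) : Prop :=
  symmetric e /\ irreflexive e.

Definition induced_rel (T : finType) (e : rel T) (X : {set T}) : rel T :=
  [rel x y | [&& x \in X, y \in X & e x y]].

Definition connected_on (T : finType) (e : rel T) (X : {set T}) : Prop :=
  forall x y, x \in X -> y \in X -> connect (induced_rel e X) x y.

Definition graph_connected (T : finType) (e : rel T) : Prop :=
  connected_on e [set: T].

Definition compl_rel (T : finType) (e : rel T) : rel T :=
  [rel x y | (x != y) && ~~ e x y].

Definition co_connected (T : finType) (e : rel T) : Prop :=
  graph_connected (compl_rel e).

Definition connecting_hypergraph (T : finType) (e : rel T)
    (H : {set {set T}}) : Prop :=
  (forall E, E \in H -> 2 <= #|E| /\ connected_on e E) /\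
  (forall u v, u != v -> ~~ e u v -> exists2 E, E \in H & (u \in E) && (v \in E)).

(* cost(H) = sum over E in H of (|E| - 2); truncated subtraction is harmless
   since every hyperedge of a connecting hypergraph has |E| >= 2. *)
Definition hcost (T : finType) (H : {set {set T}}) : nat :=
  \sum_(E in H) (#|E| - 2).

(* Main.v *)
Require Import Defs.
From mathcomp Require Import all_boot.
From mathcomp Require Import zify.
Set Implicit Arguments. Unset Strict Implicit.

Lemma step_out (T : finType) (r : rel T) x y :
  connect r x y -> x != y -> exists z, r x z.
Proof.
case/connectP => [[|z p]] /= => [_ -> |]; first by rewrite eqxx.
by case/andP => h _ _ _; exists z.
Qed.

Lemma four_le (T : finType) (E : {set T}) x y z w :
  x \in E -> y \in E -> z \in E -> w \in E ->
  x != y -> x != z -> x != w -> y != z -> y != w -> z != w -> 4 <= #|E|.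
Proof.
move=> xE yE zE wE xy xz xw yz yw zw.
rewrite (cardsD1 x E) (cardsD1 y (E :\ x)) (cardsD1 z (E :\ x :\ y)) (cardsD1 w (E :\ x :\ y :\ z)).
rewrite !inE xE yE zE wE /=.
by rewrite (eq_sym y x) (eq_sym z x) (eq_sym w x) (eq_sym z y) (eq_sym w y) (eq_sym w z) xy xz xw yz yw zw.
Qed.

Lemma three_le (T : finType) (E : {set T}) x y z :
  x \in E -> y \in E -> z \in E ->
  x != y -> x != z -> y != z -> 3 <= #|E|.
Proof.
move=> xE yE zE xy xz yz.
rewrite (cardsD1 x E) (cardsD1 y (E :\ x)) (cardsD1 z (E :\ x :\ y)).
rewrite !inE xE yE zE /=.
by rewrite (eq_sym y x) (eq_sym z x) (eq_sym z y) xy xz yz.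
Qed.

Definition feff (T : finType) (e : rel T) (E : {set T}) : {set T} :=
  if 4 <= #|E| then E else [set x in E | [exists y in E, (x != y) && ~~ e x y]].

Lemma term_bound (T : finType) (e : rel T) (E : {set T}) :
  simple_graph e -> connected_on e E ->
  2 * (#|feff e E| - 1) <= 3 * (#|E| - 2).
Proof.
move=> [sym irr] cE; rewrite /feff.
case: ifP => h4; first lia.
case: (set_0Vmem [set x in E | [exists y in E, (x != y) && ~~ e x y]]) => [->|[x]].
  by rewrite cards0.
rewrite inE => /andP [xE /exists_inP [y yE /andP [xy nexy]]].
have [z /and3P [_ zE exz]] := step_out (cE x y xE yE) xy.
have [w /and3P [_ wE eyw]] := step_out (cE y x yE xE) (introN eqP (fun h => (negP xy) (introT eqP (esym h)))).
have zx : z != x by apply/eqP => zx; rewrite zx irr in exz.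
have zy : z != y by apply/eqP => zy; rewrite -zy exz in nexy.
have wy : w != y by apply/eqP => wy; rewrite wy irr in eyw.
have wx : w != x by apply/eqP => wx; rewrite wx sym in eyw; by rewrite eyw in nexy.
have wz : w = z.
  apply/eqP; apply/negPn/negP => wz.
  have xz : x != z by rewrite eq_sym.
  have xw : x != w by rewrite eq_sym.
  have yw : y != w by rewrite eq_sym.
  have yz : y != z by rewrite eq_sym.
  have zw : z != w by rewrite eq_sym.
  have := four_le xE yE zE wE xy xz xw yz yw zw.
  by rewrite h4.
subst w.
set S := [set _ in E | _].
have zn : z \notin S.
  rewrite inE zE /=; apply/negP => /exists_inP [v vE /andP [zv nezv]].
  have vx : v != x by apply/eqP => vx; rewrite vx sym exz in nezv.
  have vy : v != y by apply/eqP => vy; rewrite vy sym eyw in nezv.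
  have xz : x != z by rewrite eq_sym.
  have xv : x != v by rewrite eq_sym.
  have yv : y != v by rewrite eq_sym.
  have yz : y != z by rewrite eq_sym.
  have := four_le xE yE zE vE xy xz xv yz yv zv.
  by rewrite h4.
have sub : S \subset E :\ z.
  apply/subsetP => v vS; rewrite in_setD1.
  have vE : v \in E by move: vS; rewrite inE => /andP [].
  rewrite vE andbT; apply/eqP => vz; by rewrite -vz vS in zn.
have cS := subset_leq_card sub.
have cE1 := cardsD1 z E; rewrite zE in cE1.
have h3 : 3 <= #|E|.
  by apply: (three_le xE yE zE xy); rewrite eq_sym.
lia.
Qed.
Lemma closure_bound (T I : finType) (f : I -> {set T}) (n : nat) :
  forall (P : {set I}) (A : {set T}), #|P| <= n -> A != set0 ->
  exists B : {set T}, [/\ A \subset B,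
     #|B| <= #|A| + \sum_(i in P) (#|f i| - 1) &
     forall i, i \in P -> [disjoint f i & B] || (f i \subset B)].
Proof.
elim: n => [|n IH] P A hP hA.
  exists A; split => //; first by rewrite leq_addr.
  by move=> i iP; move: hP; rewrite leqn0 => /eqP/cards0_eq P0; rewrite P0 inE in iP.
case: (boolP [exists i in P, ~~ [disjoint f i & A]]).
  case/exists_inP => i iP hi.
  have hA' : A :|: f i != set0.
    apply/set0Pn; case/set0Pn: hA => x xA; exists x; by rewrite inE xA.
  have hP' : #|P :\ i| <= n.
    by move: hP; rewrite (cardsD1 i P) iP add1n ltnS.
  have [B [sB cB clB]] := IH (P :\ i) (A :|: f i) hP' hA'.
  exists B; split.
  - exact: subset_trans (subsetUl _ _) sB.
  - rewrite (big_setD1 i iP) /=.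
    have hI : 0 < #|A :&: f i|.
      rewrite card_gt0; move: hi; rewrite disjoint_sym -setI_eq0 setIC; done.
    have hU := cardsU A (f i).
    have hU2 : #|A :&: f i| <= #|f i| by rewrite subset_leq_card // subsetIr.
    lia.
  - move=> j jP; case: (eqVneq j i) => [->|ji].
      by rewrite (subset_trans (subsetUr _ _) sB) orbT.
    by apply: clB; rewrite in_setD1 ji jP.
move/exists_inPn => hd.
exists A; split => //; first by rewrite leq_addr.
by move=> i iP; have := hd i iP; rewrite negbK => ->.
Qed.

Theorem mainTheorem8 (T : finType) (e : rel T) (H : {set {set T}}) :
  simple_graph e -> 2 <= #|T| -> graph_connected e -> co_connected e ->
  connecting_hypergraph e H ->
  2 * (#|T| - 1) <= 3 * hcost H.
Proof.
move=> sg hn conn coconn [hH cov].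
have [sym irr] := sg.
have : 0 < #|T| by lia.
case/card_gt0P => x0 _.
have hA : [set x0] != set0 by apply/set0Pn; exists x0; rewrite inE.
have [B [sB cB clB]] := closure_bound (feff e) (leqnn #|H|) hA.
have cl : closed (induced_rel (compl_rel e) [set: T]) B.
  move=> u v /and3P [_ _ /andP [uv neuv]].
  have [E EH /andP [uE vE]] := cov u v uv neuv.
  have uF : u \in feff e E.
    rewrite /feff; case: ifP => // _; rewrite inE uE /=.
    by apply/exists_inP; exists v => //; rewrite uv.
  have vF : v \in feff e E.
    rewrite /feff; case: ifP => // _; rewrite inE vE /=.
    by apply/exists_inP; exists u => //; rewrite eq_sym uv sym.
  case/orP: (clB E EH) => [dj|sb].
    by rewrite (disjointFr dj uF) (disjointFr dj vF).
  by rewrite (subsetP sb _ uF) (subsetP sb _ vF).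
have Btot : B = [set: T].
  apply/setP => y; rewrite inE.
  have := closed_connect cl (coconn x0 y (in_setT _) (in_setT _)).
  by rewrite (subsetP sB x0 (set11 _)) => <-.
rewrite Btot cardsT cards1 in cB.
have hs : 2 * (\sum_(E in H) (#|feff e E| - 1)) <= 3 * hcost H.
  rewrite /hcost !big_distrr /=; apply: leq_sum => E EH.
  exact: term_bound sg (hH E EH).2.
move: cB hs. set S := \sum_(_ in H) _. lia.
Qed.
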